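(* Let $X=(I,(\cdot,\cdot))$ be a Cartan datum and $\sigma$ an admissible diagram automorphism of $X$ of order $n=am$; put $\tau=\sigma^m$. Let $X^\tau=(I^\tau,(\cdot,\cdot)_\tau)$ be the Cartan datum induced from $(X,\tau)$, let $\underline\sigma$ be the permutation of $I^\tau$ induced by $\sigma$ (an admissible diagram automorphism of $X^\tau$), and let $(\underline I^\tau,(\cdot,\cdot)_2)$ be the Cartan datum induced from $(X^\tau,\underline\sigma)$. Identify $\underline I^\tau$ with the set $\underline I$ of $\sigma$-orbits in $I$ by sending a $\underline\sigma$-orbit $\tilde\eta$ to $\eta=\bigcup_{\gamma\in\tilde\eta}\gamma$. Then under $\alpha_{\tilde\eta}\mapsto\alpha_\eta$ one has $(\alpha_{\tilde\eta},\alpha_{\tilde\eta'})_2=(\alpha_\eta,\alpha_{\eta'})_1$ for all $\tilde\eta,\tilde\eta'$; hence the Cartan datum induced from $(X^\tau,\underline\sigma)$ is isomorphic to the Cartan datum $\underline X=(\underline I,(\cdot,\cdot)_1)$ induced from $(X,\sigma)$.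
   Context: A Cartan datum $X=(I,(\cdot,\cdot))$ is a finite set $I$ with a symmetric bilinear form on $\bigoplus_{i\in I}\mathbb Q\alpha_i$ such that $(\alpha_i,\alpha_j)\in\mathbb Z$, $(\alpha_i,\alpha_i)\in2\mathbb Z_{>0}$, and $2(\alpha_i,\alpha_j)/(\alpha_i,\alpha_i)\in\mathbb Z_{\le0}$ for $i\ne j$. A diagram automorphism is a permutation $\sigma$ of $I$ with $(\alpha_{\sigma(i)},\alpha_{\sigma(j)})=(\alpha_i,\alpha_j)$; it is admissible if $(\alpha_i,\alpha_j)=0$ for all distinct $i,j$ in the same $\sigma$-orbit. For such $\sigma$ with orbit set $\underline I$, the Cartan datum induced from $(X,\sigma)$ is $(\underline I,(\cdot,\cdot)_1)$ with form on $\bigoplus_{\eta\in\underline I}\mathbb Q\alpha_\eta$ given by $(\alpha_\eta,\alpha_\eta)_1=(\alpha_i,\alpha_i)|\eta|$ for any $i\in\eta$, and $(\alpha_\eta,\alpha_{\eta'})_1=\sum_{i\in\eta,j\in\eta'}(\alpha_i,\alpha_j)$ for $\eta\ne\eta'$. Two Cartan data are isomorphic if there is a bijection of index sets carrying one form to the other. *)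

(* Defs.v *)
From HB Require Import structures.
From mathcomp Require Import all_boot all_order all_algebra all_fingroup.
Set Implicit Arguments. Unset Strict Implicit. Unset Printing Implicit Defensive.
Import Order.TTheory GRing.Theory Num.Theory.
Local Open Scope ring_scope.

(* A Cartan datum on a finite index set I is given by the values
   c i j = (alpha_i, alpha_j) of the symmetric bilinear form on the
   basis vectors (the form on the Q-span is determined by bilinearity). *)
Definition cartan_datum (I : finType) (c : I -> I -> int) : Prop :=
  (forall i j, c i j = c j i) /\
  (forall i, 0 < c i i /\ (2 %| c i i)%Z) /\
  (forall i j, i != j -> (c i i %| 2 * c i j)%Z /\ 2 * c i j <= 0).

Definition diagram_aut (I : finType) (c : I -> I -> int) (s : {perm I}) : Prop :=
  forall i j, c (s i) (s j) = c i j.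

Definition admissible (I : finType) (c : I -> I -> int) (s : {perm I}) : Prop :=
  diagram_aut c s /\
  (forall i j, i != j -> j \in porbit s i -> c i j = 0).

Definition orbit_type (I : finType) (s : {perm I}) : finType :=
  {O : {set I} | O \in porbits s}.

Definition induced_form (I : finType) (c : I -> I -> int) (s : {perm I})
    (e e' : orbit_type s) : int :=
  if e == e' then
    (if [pick i in val e] is Some i then c i i * (#|val e|)%:Z else 0)
  else \sum_(i in val e) \sum_(j in val e') c i j.
Arguments induced_form {I} c s e e'.

(* Main.v *)
Require Import Defs.
From HB Require Import structures.
From mathcomp Require Import all_boot all_order all_algebra all_fingroup.
Import Order.TTheory GRing.Theory Num.Theory.
Local Open Scope ring_scope.
Set Implicit Arguments. Unset Strict Implicit.

Lemma orbit_ex (T : finType) (s : {perm T}) (e : orbit_type s) :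
  exists x, val e = porbit s x.
Proof. by have := valP e; rewrite /porbits => /imsetP[x _ ->]; exists x. Qed.

Lemma orbit_in (T : finType) (s : {perm T}) (e : orbit_type s) x :
  x \in val e -> val e = porbit s x.
Proof.
case: (orbit_ex e) => y -> hx; apply/eqP; by rewrite eq_porbit_mem porbit_sym.
Qed.

Lemma orbit_disj (T : finType) (s : {perm T}) (e e' : orbit_type s) :
  e != e' -> [disjoint val e & val e'].
Proof.
move=> ne; rewrite disjoint_subset; apply/subsetP => x h1; rewrite inE.
apply/negP => h2; move/negP: ne; apply; apply/eqP/val_inj.
by rewrite (orbit_in h1) (orbit_in h2).
Qed.

Lemma orbit_ne (T : finType) (s : {perm T}) (e : orbit_type s) :
  exists x, x \in val e.
Proof. by case: (orbit_ex e) => x ->; exists x; apply: porbit_id. Qed.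

Lemma mem_porbits' (T : finType) (s : {perm T}) x : porbit s x \in porbits s.
Proof. by rewrite /porbits imset_f. Qed.

Lemma da_exp (T : finType) (c : T -> T -> int) (s : {perm T}) :
  diagram_aut c s -> forall n, diagram_aut c (s ^+ n)%g.
Proof.
move=> hs; elim=> [|n IH] i j; first by rewrite expg0 !perm1.
by rewrite expgSr !permM hs IH.
Qed.

Lemma da_orbit (T : finType) (c : T -> T -> int) (s : {perm T}) x y :
  diagram_aut c s -> y \in porbit s x -> c y y = c x x.
Proof. by move=> hs /porbitP[n ->]; apply: da_exp. Qed.

Lemma diag_eq (T : finType) (c : T -> T -> int) (s : {perm T}) (O : {set T}) x i :
  diagram_aut c s -> O \subset porbit s x -> i \in O ->
  (if [pick j in O] is Some j then c j j * (#|O|)%:Z else 0) = c i i * (#|O|)%:Z.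
Proof.
move=> hs sub hi; case: pickP => [j hj | h]; last by move: (h i); rewrite hi.
by rewrite (da_orbit hs (subsetP sub _ hj)) (da_orbit hs (subsetP sub _ hi)).
Qed.

Lemma porbit_exp_sub (T : finType) (s : {perm T}) m x :
  porbit (s ^+ m)%g x \subset porbit s x.
Proof. by apply/subsetP => y /porbitP [l ->]; rewrite -expgM mem_porbit. Qed.

Lemma porbit_stepn (T : finType) (s : {perm T}) x y n :
  y \in porbit s x -> (s ^+ n)%g y \in porbit s x.
Proof.
by case/porbitP=> l ->; apply/porbitP; exists (l + n)%N; rewrite expgD permM.
Qed.

Lemma sum_bigcup (R : Type) (idx : R) (op : Monoid.com_law idx)
  (J T : finType) (K : {set J}) (F : J -> {set T}) (E : T -> R) :
  (forall i j, i \in K -> j \in K -> i != j -> [disjoint F i & F j]) ->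
  \big[op/idx]_(x in \bigcup_(j in K) F j) E x =
  \big[op/idx]_(j in K) \big[op/idx]_(x in F j) E x.
Proof.
move=> hd; pose F' j := if j \in K then F j else set0.
have ->: \bigcup_(j in K) F j = \bigcup_j F' j.
  by rewrite big_mkcond /F'; apply: eq_bigr => j _; case: ifP.
rewrite partition_disjoint_bigcup.
  rewrite [RHS]big_mkcond; apply: eq_bigr => j _; rewrite /F'.
  by case: ifP => // _; rewrite big_set0.
move=> i j ne; rewrite /F'; case: (boolP (i \in K)) => hi;
  case: (boolP (j \in K)) => hj; try exact: hd;
  try (by apply: eq_disjoint0 => x; rewrite in_set0);
  by rewrite disjoint_sym; apply: eq_disjoint0 => x; rewrite in_set0.
Qed.

Lemma diag_def (J : finType) (cc : J -> J -> int) (s : {perm J}) (e : orbit_type s) :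
  induced_form cc s e e =
  (if [pick i in val e] is Some i then cc i i * (#|val e|)%:Z else 0).
Proof. by rewrite /induced_form eqxx. Qed.

Lemma off_def (J : finType) (cc : J -> J -> int) (s : {perm J}) (e e' : orbit_type s) :
  e != e' -> induced_form cc s e e' = \sum_(i in val e) \sum_(j in val e') cc i j.
Proof. by move=> ne; rewrite /induced_form (negbTE ne). Qed.

Unset Implicit Arguments.

Theorem lemma2p4 (I : finType) (c : I -> I -> int) (sigma : {perm I})
    (a m : nat)
    (hX : cartan_datum c)
    (hsig : admissible c sigma)
    (hord : #[sigma]%g = (a * m)%N)
    (usig : {perm orbit_type (sigma ^+ m)%g})
    (husig : forall g : orbit_type (sigma ^+ m)%g,
        val (usig g) = sigma @: val g) :
  admissible (induced_form c (sigma ^+ m)%g) usig /\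
  exists phi : orbit_type usig -> orbit_type sigma,
    bijective phi /\
    (forall k, val (phi k) = \bigcup_(g in (val k : {set orbit_type (sigma ^+ m)%g})) (val g : {set I})) /\
    (forall k k', induced_form (induced_form c (sigma ^+ m)%g) usig k k'
                  = induced_form c sigma (phi k) (phi k')).
Proof.
have hsd : diagram_aut c sigma := hsig.1.
have F2 : forall n g, val ((usig ^+ n)%g g) = (sigma ^+ n)%g @: val g.
  elim=> [|n IH] g.
    rewrite expg0 perm1 -[LHS](imset_id (val g)); apply: eq_imset => x.
    by rewrite perm1.
  rewrite expgSr permM husig IH -imset_comp; apply: eq_imset => x.
  by rewrite /= expgSr permM.
have F2c : forall n g, #|val ((usig ^+ n)%g g)| = #|val g|.
  by move=> n g; rewrite F2 card_imset //; apply: perm_inj.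
have gsub : forall (g : orbit_type (sigma ^+ m)%g) x, x \in val g ->
    val g \subset porbit sigma x.
  by move=> g x hx; rewrite (orbit_in hx) porbit_exp_sub.
have hda : diagram_aut (induced_form c (sigma ^+ m)%g) usig.
  move=> g g'; rewrite /induced_form (inj_eq perm_inj).
  case: eqP => [_|ne].
    case: (orbit_ne g) => x hx.
    rewrite husig (@diag_eq _ _ sigma _ x (sigma x) hsd); first last.
    - by apply: imset_f.
    - apply/subsetP => y /imsetP[z hz ->].
      by have := porbit_stepn 1 (subsetP (gsub _ _ hx) z hz); rewrite expg1.
    rewrite (@diag_eq _ _ sigma _ x x hsd (gsub _ _ hx) hx).
    by rewrite hsd card_imset //; apply: perm_inj.
  rewrite !husig big_imset /=; last exact: in2W perm_inj.
  apply: eq_bigr => i _; rewrite big_imset /=; last exact: in2W perm_inj.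
  by apply: eq_bigr => j _; rewrite hsd.
split.
  split=> // g g' ne /porbitP[n eg'].
  rewrite /induced_form (negbTE ne).
  have hdis := orbit_disj ne.
  rewrite eg' F2; apply: big1 => i hi.
  rewrite big_imset /=; last exact: in2W perm_inj.
  apply: big1 => j hj; apply: hsig.2.
    apply/eqP => e; move: (disjointFr hdis hi); rewrite e eg' F2 imset_f //.
  have : j \in porbit sigma i by apply: (subsetP (gsub _ _ hi)).
  exact: porbit_stepn.
have UP : forall (g0 : orbit_type (sigma ^+ m)%g) x, val g0 = porbit (sigma ^+ m)%g x ->
    \bigcup_(g in porbit usig g0) val g = porbit sigma x.
  move=> g0 x hx; apply/setP => y; apply/bigcupP/idP.
    case=> g /porbitP[n ->]; rewrite F2 hx => /imsetP[z hz ->].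
    exact: porbit_stepn (subsetP (porbit_exp_sub sigma m x) _ hz).
  case/porbitP=> n ->; exists ((usig ^+ n)%g g0); first exact: mem_porbit.
  by rewrite F2 hx imset_f // porbit_id.
have Umem : forall k : orbit_type usig,
    \bigcup_(g in val k) val g \in porbits sigma.
  move=> k; case: (orbit_ex k) => g0 ->; case: (orbit_ex g0) => x hx.
  by rewrite (UP _ _ hx) mem_porbits'.
pose phi (k : orbit_type usig) : orbit_type sigma := @exist _ (fun O => O \in porbits sigma) _ (Umem k).
have phiE : forall k, val (phi k) = \bigcup_(g in val k) val g by [].
have phi_inj : injective phi.
  move=> k k' e.
  case: (orbit_ex k) => g0 ek; case: (orbit_ex g0) => x hx.
  have : x \in val (phi k') by rewrite -e phiE ek (UP _ _ hx) porbit_id.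
  rewrite phiE => /bigcupP[g hg hxg].
  have eg : g = g0 by apply: val_inj; rewrite (orbit_in hxg) hx.
  by apply: val_inj; rewrite ek (orbit_in hg) eg.
have phi_surj : forall O : orbit_type sigma, exists k, O = phi k.
  move=> O; case: (orbit_ex O) => x hx.
  pose g0 : orbit_type (sigma ^+ m)%g := @exist _ (fun O => O \in porbits (sigma ^+ m)%g) _ (mem_porbits' (sigma ^+ m)%g x).
  pose k : orbit_type usig := @exist _ (fun O => O \in porbits usig) _ (mem_porbits' usig g0).
  exists k; apply: val_inj; rewrite hx phiE; symmetry; exact: (UP g0 x erefl).
have phi_bij : bijective phi.
  apply: (inj_card_bij phi_inj).
  rewrite -(card_codom phi_inj); apply: subset_leq_card; apply/subsetP => y _.
  by case: (phi_surj y) => k ->; apply: codom_f.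
exists phi; split; first exact: phi_bij.
split; first by [].
move=> k k'; case: (eqVneq k k') => [<-|ne].
  rewrite !diag_def.
  case: (orbit_ex k) => g0 ek; case: (orbit_ex g0) => x hx.
  have xg0 : x \in val g0 by rewrite hx porbit_id.
  rewrite (@diag_eq _ _ usig _ g0 g0 hda); first last.
  - by rewrite ek porbit_id.
  - by rewrite ek.
  rewrite diag_def (@diag_eq _ _ sigma _ x x hsd (gsub _ _ xg0) xg0).
  have ePk : val (phi k) = porbit sigma x by rewrite phiE ek (UP _ _ hx).
  rewrite (@diag_eq _ _ sigma _ x x hsd); first last.
  - by rewrite ePk porbit_id.
  - by rewrite ePk.
  have cardU : #|val (phi k)| = (#|val g0| * #|val k|)%N.
    rewrite phiE; transitivity (\sum_(i in \bigcup_(g in val k) val g) 1)%N.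
      by rewrite sum1_card.
    rewrite sum_bigcup; last first.
      by move=> ? ? _ _; apply: orbit_disj.
    rewrite (eq_bigr (fun _ => #|val g0|)); last first.
      move=> g; rewrite ek => /porbitP[n ->]; by rewrite sum1_card F2c.
    by rewrite sum_nat_const mulnC.
  by rewrite cardU PoszM mulrA.
rewrite !off_def //; last by rewrite (inj_eq phi_inj).
rewrite !phiE sum_bigcup; last by move=> ? ? _ _; apply: orbit_disj.
apply: eq_bigr => g hg.
rewrite (eq_bigr (fun i => \sum_(g' in val k') \sum_(j in val g') c i j)); last first.
  by move=> i _; rewrite sum_bigcup // => ? ? _ _; apply: orbit_disj.
rewrite exchange_big /=; apply: eq_bigr => g' hg'.
rewrite off_def //; apply/eqP => e; subst g'.
by move: (disjointFr (orbit_disj ne) hg); rewrite hg'.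
Qed.
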